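(* Let $K\ge1$. Every $L$-layer MinAgg GNN with $L<K$ has nonzero error on the training pair $(H^{(0)}_K,\Gamma^K(H^{(0)}_K))$: there is $w\in\{v_K,u_K\}$ with $h^{(L)}_w(H^{(0)}_K)\ne x_w(\Gamma^K(H^{(0)}_K))$.
   Context: Attributed graphs: $G=(V,E,X_{\mathrm v},X_{\mathrm e})$ with $V$ finite, undirected edges, nonnegative edge weights and nonnegative node features; every node has a self-loop of weight $0$ and $\mathcal N(v)=\{v\}\cup\{u:\{u,v\}\in E\}$. A large constant $\beta>0$ encodes ''infinite distance''. $x_v(H)$ is the feature of $v$ in $H$. The Bellman–Ford operator $\Gamma$ sends $G$ to the graph with the same vertices, edges and weights and node features $x'_v=\min\{x_u+x_{(u,v)}:u\in\mathcal N(v)\}$; $\Gamma^K$ is its $K$-fold iterate. The graph $H^{(0)}_K$: vertices $v_0,\dots,v_K,u_0,\dots,u_K$; edges $\{v_{i-1},v_i\}$, $\{u_{i-1},u_i\}$, $\{u_{i-1},v_i\}$, $\{v_{i-1},u_i\}$ for $i\in[K]$; weights $1$ on $\{u_{i-1},v_i\}$ and $\{v_{i-1},u_i\}$, $0$ on $\{v_{i-1},v_i\}$ and $\{u_{i-1},u_i\}$; node features $x_{v_0}=0$, $x_w=\beta$ otherwise. MinAgg GNN: for each $\ell\in[L]$, ReLU MLPs ($x^{(j)}=\sigma(W_jx^{(j-1)}+b_j)$) $f^{\mathrm{agg},(\ell)}:\mathbb R^{d_{\ell-1}+1}\to\mathbb R^d$ and $f^{\mathrm{up},(\ell)}:\mathbb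 R^{d+d_{\ell-1}}\to\mathbb R^{d_\ell}$, $d_0=d_L=1$, $d_\ell=d$ otherwise; $h^{(0)}_v=x_v$ and $h^{(\ell)}_v=f^{\mathrm{up},(\ell)}\big(\min_{u\in\mathcal N(v)}f^{\mathrm{agg},(\ell)}(h^{(\ell-1)}_u\oplus x_{(u,v)})\oplus h^{(\ell-1)}_v\big)$ (coordinatewise min, $\oplus$ concatenation). *)

(* Defs.v *)
From HB Require Import structures.
From mathcomp Require Import all_boot all_order all_algebra.
Set Implicit Arguments. Unset Strict Implicit. Unset Printing Implicit Defensive.
Import Order.TTheory GRing.Theory Num.Theory.
Local Open Scope ring_scope.

Section Defs.
Variable R : realFieldType.

Definition relu (a : R) : R := Num.max 0 a.

Inductive mlp : nat -> nat -> Type :=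
| MLPone n m (W : 'M[R]_(m, n)) (b : 'cV[R]_m) : mlp n m
| MLPcons n m p (W : 'M[R]_(m, n)) (b : 'cV[R]_m) (f : mlp m p) : mlp n p.

Fixpoint mlp_eval n m (f : mlp n m) : 'cV[R]_n -> 'cV[R]_m :=
  match f in mlp n m return 'cV[R]_n -> 'cV[R]_m with
  | MLPone _ _ W b => fun x => map_mx relu (W *m x + b)
  | MLPcons _ _ _ W b f' => fun x => mlp_eval f' (map_mx relu (W *m x + b))
  end.

Variable T : finType.
Variable adj : rel T.
Variable ew : T -> T -> R.     (* edge weight x_(u,v); self-loop weight ew v v *)

Definition nbhd (v u : T) : bool := (u == v) || adj u v.

(* minimum of F over N(v) (nonempty since v ∈ N(v)) *)
Definition nmin (F : T -> R) (v : T) : R :=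
  \big[Num.min/F v]_(u | nbhd v u) F u.

(* Bellman–Ford operator on node features; Γ^K is its K-fold iterate *)
Definition bf_step (x : T -> R) : T -> R :=
  fun v => nmin (fun u => x u + ew u v) v.

Definition bf_iter (K : nat) (x : T -> R) : T -> R := iter K bf_step x.

Definition vmin d (F : T -> 'cV[R]_d) (v : T) : 'cV[R]_d :=
  \col_i nmin (fun u => F u i 0) v.

(* MinAgg GNN with L layers and hidden width d: d_0 = d_L = 1, d_l = d else *)
Definition gdim (L d l : nat) : nat := if l == 0%N then 1%N else if l == L then 1%N else d.

Variables (L d : nat).
Variable fagg : forall l : nat, mlp (gdim L d l + 1) d.
Variable fup : forall l : nat, mlp (d + gdim L d l) (gdim L d l.+1).
Variable x : T -> R.

Definition gnn_layer (l : nat) (h : T -> 'cV[R]_(gdim L d l)) : T -> 'cV[R]_(gdim L d l.+1) :=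
  fun v => mlp_eval (fup l)
     (col_mx (vmin (fun u => mlp_eval (fagg l) (col_mx (h u) (const_mx (ew u v)))) v)
             (h v)).

Fixpoint gnn_hidden (l : nat) : T -> 'cV[R]_(gdim L d l) :=
  match l return T -> 'cV[R]_(gdim L d l) with
  | 0 => fun v => const_mx (x v)
  | l'.+1 => gnn_layer (gnn_hidden l')
  end.

End Defs.

(* The graph H^(0)_K: vertices (false, i) = v_i and (true, i) = u_i, i = 0..K. *)
Definition HV (K : nat) : finType := (bool * 'I_K.+1)%type.

(* edges: {v_{i-1},v_i}, {u_{i-1},u_i}, {u_{i-1},v_i}, {v_{i-1},u_i} *)
Definition H_adj (K : nat) : rel (HV K) :=
  fun a b => (nat_of_ord a.2 == (nat_of_ord b.2).+1) || (nat_of_ord b.2 == (nat_of_ord a.2).+1).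

Definition H_w (R : realFieldType) (K : nat) : HV K -> HV K -> R :=
  fun a b => if a.1 == b.1 then 0 else 1.

Definition H_x (R : realFieldType) (beta : R) (K : nat) : HV K -> R :=
  fun a => if (a.1 == false) && (nat_of_ord a.2 == 0%N) then 0 else beta.

Definition vK (K : nat) : HV K := (false, ord_max).
Definition uK (K : nat) : HV K := (true, ord_max).

(* Main.v *)
Require Import Defs.
From HB Require Import structures.
From mathcomp Require Import all_boot all_order all_algebra.
From mathcomp Require Import zify.
Import Order.TTheory GRing.Theory Num.Theory.
Local Open Scope ring_scope.
Set Implicit Arguments.

Lemma min_transport (R : realFieldType) (T : finType) (P Q : pred T) (F G : T -> R)
  (x1 x2 : R) (s t : T -> T) :
  x1 = x2 ->
  (forall u, P u -> Q (s u) /\ F u = G (s u)) ->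
  (forall w, Q w -> P (t w) /\ G w = F (t w)) ->
  \big[Num.min/x1]_(u | P u) F u = \big[Num.min/x2]_(u | Q u) G u.
Proof.
move=> e12 hs ht; apply/le_anti/andP; split.
- apply/bigmin_geP; split; first by rewrite -e12 bigmin_le_id.
  move=> w Qw; have [Pt ->] := ht w Qw; exact: bigmin_le_cond.
- apply/bigmin_geP; split; first by rewrite e12 bigmin_le_id.
  move=> u Pu; have [Qs ->] := hs u Pu; exact: bigmin_le_cond.
Qed.

Definition flip K (c : bool) (u : HV K) : HV K := (u.1 (+) c, u.2).

Lemma sym_step K (R : realFieldType) (a b : HV K) (F G : HV K -> R) (l : nat) :
  (l.+1 < a.2)%N -> a.2 = b.2 ->
  (forall u : HV K, (l < u.2)%N -> F u = G (flip (a.1 != b.1) u)) ->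
  nmin (H_adj (K:=K)) F a = nmin (H_adj (K:=K)) G b.
Proof.
move=> la e12 hFG.
have e12n : nat_of_ord a.2 = nat_of_ord b.2 by rewrite e12.
have fa : flip (a.1 != b.1) a = b.
  by case: a b e12 {la hFG e12n} => [a1 a2] [b1 b2] /= ->; case: a1; case: b1.
have fb : flip (a.1 != b.1) b = a.
  by case: a b e12 {la hFG fa e12n} => [a1 a2] [b1 b2] /= ->; case: a1; case: b1.
have ff : forall u : HV K, flip (a.1 != b.1) (flip (a.1 != b.1) u) = u.
  by move=> u; rewrite /flip /= -addbA addbb addbF -surjective_pairing.
have fadj : forall (u v : HV K) c, H_adj (flip c u) v = H_adj u v.
  by move=> u v c.
have fadj2 : forall (u v : HV K) c, H_adj u (flip c v) = H_adj u v.
  by move=> u v c.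
rewrite /nmin; apply: (@min_transport _ _ _ _ _ _ _ _ (flip (a.1 != b.1)) (flip (a.1 != b.1))).
- rewrite hFG ?fa //; lia.
- move=> u; rewrite /nbhd => /orP[/eqP->|hadj].
    rewrite fa eqxx; split=> //; rewrite hFG ?fa //; lia.
  split; first by rewrite /nbhd fadj; apply/orP; right; move: hadj; rewrite /H_adj; lia.
  apply: hFG; move: hadj; rewrite /H_adj => /orP[/eqP->|/eqP e]; lia.
- move=> w; rewrite /nbhd => /orP[/eqP->|hadj].
    rewrite fb eqxx; split=> //; rewrite hFG ?ff ?fa //; lia.
  split; first by rewrite /nbhd fadj; apply/orP; right; move: hadj; rewrite /H_adj; lia.
  rewrite hFG ?ff //; move: hadj la; rewrite /H_adj e12n /= => /orP[/eqP->|/eqP e]; lia.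
Qed.

Lemma gnn_sym (R : realFieldType) (beta : R) K L d
  (fagg : forall l : nat, mlp R (gdim L d l + 1) d)
  (fup : forall l : nat, mlp R (d + gdim L d l) (gdim L d l.+1)) :
  forall l (a b : HV K), (l < a.2)%N -> a.2 = b.2 ->
  gnn_hidden (H_adj (K:=K)) (H_w R (K:=K)) fagg fup (H_x beta (K:=K)) l a
  = gnn_hidden (H_adj (K:=K)) (H_w R (K:=K)) fagg fup (H_x beta (K:=K)) l b.
Proof.
elim=> [|l IH] a b la e.
  have en : nat_of_ord a.2 = nat_of_ord b.2 by rewrite e.
  rewrite /= /H_x; move: la; rewrite en => la.
  by rewrite (_ : (nat_of_ord b.2 == 0%N) = false) ?andbF //; apply/eqP; lia.
rewrite /= /gnn_layer; congr (mlp_eval _ (col_mx _ _)); last first.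
  by apply: IH => //; lia.
apply/matrixP=> i j; rewrite !mxE.
apply: (@sym_step K R a b _ _ l) => // u lu.
rewrite (IH u (flip (a.1 != b.1) u)) //.
have -> : H_w R (flip (a.1 != b.1) u) b = H_w R u a.
  by rewrite /H_w /flip /=; case: (u.1); case: (a.1); case: (b.1).
by [].
Qed.

Section BF.
Variables (R : realFieldType) (beta : R) (hbeta : 0 < beta) (K : nat).
Let bx t := bf_iter (H_adj (K:=K)) (H_w R (K:=K)) t (H_x beta (K:=K)).

Lemma Hw_ge0 (u a : HV K) : 0 <= H_w R u a.
Proof. by rewrite /H_w; case: ifP => _ //; rewrite ler01. Qed.

Lemma bf_pos t : forall a : HV K, 0 <= bx t a /\ (a.1 -> 0 < bx t a).
Proof.
elim: t => [|t IH] a.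
  rewrite /bx /= /H_x; case: ifP => hc; split => //; rewrite ?ltW //.
  by move: hc => /andP[/eqP ->].
have hs : bx t.+1 a = nmin (H_adj (K:=K)) (fun u => bx t u + H_w R u a) a by [].
rewrite hs /nmin; split.
  apply/bigmin_geP; split; first by rewrite addr_ge0 ?Hw_ge0 //; case: (IH a).
  by move=> u _; rewrite addr_ge0 ?Hw_ge0 //; case: (IH u).
move=> a1; apply/bigmin_gtP; split.
  by rewrite ltr_wpDr ?Hw_ge0 //; case: (IH a) => _; apply.
move=> u _; case u1: (u.1).
  by rewrite ltr_wpDr ?Hw_ge0 //; case: (IH u) => _; apply.
rewrite /H_w u1 (negbTE (_ : false != a.1)); last by rewrite a1.
by rewrite ltr_wpDl //; case: (IH u).
Qed.

Lemma bf_zero t : forall i : 'I_K.+1, (i <= t)%N -> bx t (false, i) = 0.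
Proof.
elim: t => [|t IH] i it.
  by rewrite /bx /= /H_x /= (_ : nat_of_ord i == 0%N) //; apply/eqP; lia.
apply/le_anti/andP; split; last by case: (bf_pos t.+1 (false, i)).
have hs : bx t.+1 (false, i) = nmin (H_adj (K:=K)) (fun u => bx t u + H_w R u (false, i)) (false, i) by [].
rewrite hs /nmin.
case: (posnP i) => [i0|ip].
  apply: le_trans (bigmin_le_id _ _ _ _) _.
  by rewrite IH ?i0 // /H_w eqxx addr0.
have hj : nbhd (H_adj (K:=K)) (false, i) (false, inord i.-1).
  apply/orP; right; rewrite /H_adj /= inordK; last by have := ltn_ord i; lia.
  apply/orP; right; apply/eqP; lia.
apply: le_trans (bigmin_le_cond _ _ hj) _.
rewrite IH ?inordK /H_w ?eqxx ?addr0 //; have := ltn_ord i; lia.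
Qed.
End BF.

Unset Implicit Arguments.

Theorem mainTheorem8 (R : realFieldType) (beta : R) (hbeta : 0 < beta)
  (K : nat) (hK : (1 <= K)%N) (L d : nat) (hL : (L < K)%N)
  (fagg : forall l : nat, mlp R (gdim L d l + 1) d)
  (fup : forall l : nat, mlp R (d + gdim L d l) (gdim L d l.+1)) :
  exists w : HV K, (w \in [:: vK K; uK K]) /\
    gnn_hidden (H_adj (K:=K)) (H_w R (K:=K)) fagg fup (H_x beta (K:=K)) L w
      != const_mx (bf_iter (H_adj (K:=K)) (H_w R (K:=K)) K (H_x beta (K:=K)) w).
Proof.
have hs := @gnn_sym R beta K L d fagg fup L (vK K) (uK K) hL erefl.
have tv : bf_iter (H_adj (K:=K)) (H_w R (K:=K)) K (H_x beta (K:=K)) (vK K) = 0.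
  exact: (@bf_zero R beta hbeta K K ord_max).
have tu : 0 < bf_iter (H_adj (K:=K)) (H_w R (K:=K)) K (H_x beta (K:=K)) (uK K).
  by case: (@bf_pos R beta hbeta K K (uK K)) => _; apply.
case: (boolP (gnn_hidden (H_adj (K:=K)) (H_w R (K:=K)) fagg fup (H_x beta (K:=K)) L (vK K)
   == const_mx (bf_iter (H_adj (K:=K)) (H_w R (K:=K)) K (H_x beta (K:=K)) (vK K)))) => hv;
  last by exists (vK K); rewrite inE eqxx.
exists (uK K); split; first by rewrite !inE eqxx orbT.
apply/negP => /eqP hu; move/eqP: hv; rewrite hs hu => hc.
have e1 : gdim L d L = 1%N by rewrite /gdim; case: eqP => //; rewrite eqxx.
have i : 'I_(gdim L d L) by rewrite e1; exact: ord0.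
have := congr1 (fun M : 'M[R]_(gdim L d L, 1) => M i ord0) hc; rewrite !mxE tv => h.
by move: tu; rewrite h ltxx.
Qed.
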